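(* For every $k\ge1$ there is $c>0$ such that the following holds. For every $n>k$ and every weighted $k$-uniform hypergraph $w$ with vertex set $[n]$ such that $w([n])=0$, $$\mathbb{E}_{A,x,y}|w(A\cup\{x\})-w(A\cup\{y\})|\ge c\,n^{-k}\|w\|_1,$$ where the expectation is over a $(k-1)$-set $A\subseteq[n]$ and distinct vertices $x,y\notin A$ chosen uniformly at random.
   Context: $[n]=\{1,\dots,n\}$; a weighted $k$-uniform hypergraph on $[n]$ is a function $w$ from the $k$-subsets of $[n]$ to $\mathbb{R}$; $w([n])=\sum_e w(e)$ and $\|w\|_1=\sum_e|w(e)|$. *)

(* Defs.v *)
From mathcomp Require Import all_boot all_order all_algebra.
Set Implicit Arguments. Unset Strict Implicit. Unset Printing Implicit Defensive.
Import Order.TTheory GRing.Theory Num.Theory.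
Local Open Scope ring_scope.

(* Vertex set [n] is modelled by 'I_n.  A weighted k-uniform hypergraph is a
   function w from subsets of 'I_n to R; only its values on k-subsets matter. *)

Section Hyper.
Variable R : numDomainType.
Variables (n k : nat).
Implicit Types (w : {set 'I_n} -> R).

Definition wtotal w : R := \sum_(e : {set 'I_n} | #|e| == k) w e.

Definition wnorm1 w : R := \sum_(e : {set 'I_n} | #|e| == k) `|w e|.

Definition admissible (t : {set 'I_n} * 'I_n * 'I_n) : bool :=
  [&& #|t.1.1| == k.-1, t.1.2 \notin t.1.1, t.2 \notin t.1.1 & t.1.2 != t.2].

End Hyper.

Definition expected_diff (R : numFieldType) (n k : nat)
    (w : {set 'I_n} -> R) : R :=
  (\sum_(t : {set 'I_n} * 'I_n * 'I_n | admissible k t)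
      `|w (t.1.1 :|: [set t.1.2]) - w (t.1.1 :|: [set t.2])|)
  / (#|[set t : {set 'I_n} * 'I_n * 'I_n | admissible k t]|)%:R.

(* Main.v *)
Require Import Defs.
From mathcomp Require Import all_boot all_order all_algebra.
From mathcomp Require Import reals.
Import Order.TTheory GRing.Theory Num.Theory.
From mathcomp Require Import zify ring lra.
Set Implicit Arguments. Unset Strict Implicit. Unset Printing Implicit Defensive.

Lemma distC (T : finType) (e f : {set T}) : #|e| = #|f| -> #|e :\: f| = #|f :\: e|.
Proof.
move=> H; have h1 := cardsID f e; have h2 := cardsID e f; rewrite setIC in h2; lia.
Qed.

Lemma diff0_eq (T : finType) (e f : {set T}) : #|e| = #|f| -> #|e :\: f| = 0 -> e = f.
Proof.
move=> H /eqP; rewrite cards_eq0 setD_eq0 => sub; apply/eqP; by rewrite eqEcard sub H leqnn.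
Qed.

Lemma card1_mem (T : finType) (A : {set T}) x : #|A| = 1 -> x \in A ->
  forall z, (z \in A) = (z == x).
Proof.
move=> /eqP /cards1P [a ->]; rewrite !inE => /eqP -> z; by rewrite inE.
Qed.

Lemma exists_mid (T : finType) k d (e f : {set T}) : #|e| = k -> #|f| = k ->
  #|e :\: f| <= d.+1 -> exists g : {set T}, [/\ #|g| = k, #|e :\: g| <= d & #|g :\: f| <= 1].
Proof.
move=> He Hf Hd.
case: (leqP #|e :\: f| d) => Hd'.
  by exists f; rewrite setDv cards0.
have Hd1 : #|e :\: f| = d.+1 by lia.
have [x Hx] : exists x, x \in e :\: f by apply/card_gt0P; rewrite Hd1.
have [y Hy] : exists y, y \in f :\: e.
  by apply/card_gt0P; rewrite -distC ?Hd1 // He Hf.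
move: Hx Hy; rewrite !inE => /andP [xnf xe] /andP [yne yf].
exists (x |: (f :\ y)); split.
- rewrite cardsU1 in_setD1 (negbTE xnf) andbF /=.
  have := cardsD1 y f; rewrite yf Hf /=; lia.
- apply: (@leq_trans #|(e :\: f) :\ x|).
    apply: subset_leq_card; apply/subsetP => z; rewrite !inE.
    case: (boolP (z == y)) => [/eqP ->|_]; first by rewrite (negbTE yne) andbF.
    by case: (z == x); case: (z \in f); case: (z \in e).
  have := cardsD1 x (e :\: f); rewrite !inE xnf xe Hd1 /=; lia.
- apply: (@leq_trans #|[set x]|); last by rewrite cards1.
  apply: subset_leq_card; apply/subsetP => z; rewrite !inE.
  by case: (z == x); case: (z \in f); case: (z == y).
Qed.
Local Open Scope ring_scope.

Lemma sum_le_image (R : numDomainType) (I J : finType) (P : pred J) (Q : pred I)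
  (phi : I -> J) (F : J -> R) :
  (forall j, 0 <= F j) -> (forall j, P j -> F j = 0 \/ exists2 i, Q i & phi i = j) ->
  \sum_(j | P j) F j <= \sum_(i | Q i) F (phi i).
Proof.
move=> F0 HP.
rewrite (partition_big phi predT) //= big_mkcond /=.
apply: ler_sum => j _; case: ifP => Pj; last by apply: sumr_ge0.
case: (HP j Pj) => [->|[i Qi <-]]; first by apply: sumr_ge0.
rewrite (bigD1 i) /=; last by rewrite Qi eqxx.
by rewrite lerDl; apply: sumr_ge0.
Qed.

Definition near n k d (e f : {set 'I_n}) := [&& #|e| == k, #|f| == k & #|e :\: f| <= d]%N.

Lemma near_sym n k d (e f : {set 'I_n}) : near k d e f = near k d f e.
Proof.
rewrite /near; case: (boolP (#|e| == k)) => /= [/eqP He|]; last by rewrite andbF.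
case: (boolP (#|f| == k)) => /= [/eqP Hf|//]; by rewrite distC // He Hf.
Qed.

Definition ball (R : numDomainType) n k d (g : {set 'I_n}) : R :=
  \sum_(e | near k d g e) 1.

Lemma ball1 (R : numDomainType) n k (g : {set 'I_n}) : (0 < k)%N -> #|g| = k ->
  ball R k 1 g <= (k * n)%:R.
Proof.
move=> k0 Hg; rewrite /ball.
apply: le_trans (@sum_le_image R _ _ _ (fun p : 'I_n * 'I_n => p.1 \in g)
   (fun p => p.2 |: (g :\ p.1)) (fun _ => 1) _ _) _ => //.
  move=> f /and3P [_ /eqP Hf Hd]; right.
  case: (ltnP #|g :\: f| 1) => H1.
    have gf : g = f by apply: diff0_eq; lia.
    have [x xg] : exists x, x \in g by apply/card_gt0P; rewrite Hg.
    by exists (x, x) => //=; rewrite setD1K // gf.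
  have Hx1 : #|g :\: f| = 1%N by lia.
  have [x Hx] : exists x, x \in g :\: f by apply/card_gt0P; rewrite Hx1.
  have Hy1 : #|f :\: g| = 1%N by rewrite -distC // Hg Hf.
  have [y Hy] : exists y, y \in f :\: g by apply/card_gt0P; rewrite Hy1.
  have HX := card1_mem Hx1 Hx; have HY := card1_mem Hy1 Hy.
  exists (x, y); first by move: Hx; rewrite inE => /andP [].
  apply/setP => z /=; move: (HX z) (HY z); rewrite !inE.
  by case: (z \in f); case: (z \in g); case: (z == x); case: (z == y).
rewrite (eq_bigl (fun p : 'I_n * 'I_n => (p.1 \in g) && true)); last by move=> p; rewrite andbT.
rewrite -(pair_big_dep (fun x => x \in g) (fun _ _ => true) (fun _ _ => (1:R))) /=.
under eq_bigr do rewrite sumr_const card_ord.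
rewrite sumr_const Hg -mulrnA mulnC //.
Qed.

Lemma ball0 (R : numDomainType) n k (g : {set 'I_n}) : ball R k 0 g <= 1.
Proof.
rewrite /ball.
apply: le_trans (@sum_le_image R _ _ _ (fun _ : 'I_1 => true)
   (fun _ => g) (fun _ => 1) _ _) _ => //.
  move=> f /and3P [/eqP Hg /eqP Hf Hd]; right; exists ord0 => //.
  apply: diff0_eq; lia.
by rewrite big_ord1.
Qed.

Lemma ballS (R : numDomainType) n k d (g : {set 'I_n}) : (0 < k)%N ->
  ball R k d.+1 g <= (k * n)%:R * ball R k d g.
Proof.
move=> k0; rewrite /ball.
apply: le_trans (@sum_le_image R _ _ _
   (fun p : {set 'I_n} * {set 'I_n} => near k d g p.1 && near k 1 p.1 p.2)
   (fun p => p.2) (fun _ => 1) _ _) _ => //.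
  move=> f /and3P [/eqP Hg /eqP Hf Hd]; right.
  have [h [Hh H1 H2]] := exists_mid Hg Hf Hd.
  by exists (h, f) => //=; rewrite /near Hg Hh Hf eqxx H1 H2.
rewrite -(pair_big_dep (fun h => near k d g h) (fun h e => near k 1 h e) (fun _ _ => (1:R))) /=.
rewrite mulr_sumr; apply: ler_sum => h /and3P [_ /eqP Hh _].
by rewrite mulr1; apply: ball1.
Qed.

Lemma ball_le (R : numFieldType) n k d (g : {set 'I_n}) : (0 < k)%N ->
  ball R k d g <= (k * n)%:R ^+ d.
Proof.
move=> k0; elim: d => [|d IH]; first by rewrite expr0 ball0.
apply: le_trans (ballS _ _ _ k0) _.
by rewrite exprS ler_wpM2l.
Qed.

Definition Dsum (R : numDomainType) n k (w : {set 'I_n} -> R) d : R :=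
  \sum_e \sum_(f | near k d e f) `|w e - w f|.

Lemma DsumS (R : numFieldType) n k (w : {set 'I_n} -> R) d : (0 < k)%N ->
  Dsum k w d.+1 <= (k * n)%:R * Dsum k w d + (k * n)%:R ^+ d * Dsum k w 1.
Proof.
move=> k0; rewrite /Dsum.
apply: (@le_trans _ _ (\sum_e \sum_f \sum_(g | near k d e g && near k 1 g f)
   (`|w e - w g| + `|w g - w f|))).
  apply: ler_sum => e _.
  rewrite [X in _ <= X](bigID (fun f => near k d.+1 e f)) /= -[X in X <= _]addr0.
  apply: lerD; last by apply: sumr_ge0 => f _; apply: sumr_ge0 => g _; apply: addr_ge0.
  apply: ler_sum => f /and3P [/eqP He /eqP Hf Hd].
  have [g [Hg H1 H2]] := exists_mid He Hf Hd.
  rewrite (bigD1 g) /=; last by rewrite /near He Hg Hf eqxx H1 H2.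
  apply: le_trans (ler_distD (w g) _ _) _.
  by rewrite lerDl; apply: sumr_ge0 => g' _; apply: addr_ge0.
under eq_bigr do under eq_bigr do rewrite big_split /=.
under eq_bigr do rewrite big_split /=.
rewrite big_split /=; apply: lerD.
  rewrite mulr_sumr; apply: ler_sum => e _.
  rewrite (exchange_big_dep (fun g => near k d e g)) /=; last by move=> f g _ /andP [].
  rewrite mulr_sumr; apply: ler_sum => g Hg.
  have -> : \sum_(f | true && (near k d e g && near k 1 g f)) `|w e - w g|
      = `|w e - w g| * ball R k 1 g.
    rewrite /ball mulr_sumr; apply: eq_big => [f|f _]; first by rewrite Hg.
    by rewrite mulr1.
  rewrite mulrC ler_wpM2r //; apply: ball1 => //.
  by move: Hg => /and3P [_ /eqP -> _].
rewrite exchange_big /=.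
under eq_bigr => f _.
  rewrite (exchange_big_dep (fun g => near k 1 g f)) /=; last by move=> e g _ /andP [].
  over.
rewrite (exchange_big_dep xpredT) //=.
rewrite mulr_sumr; apply: ler_sum => g _.
rewrite mulr_sumr; apply: ler_sum => f Hf.
have -> : \sum_(e | true && (near k d e g && near k 1 g f)) `|w g - w f|
    = `|w g - w f| * ball R k d g.
  rewrite /ball mulr_sumr; apply: eq_big => [e|e _]; first by rewrite Hf andbT near_sym.
  by rewrite mulr1.
by rewrite mulrC ler_wpM2r // ball_le.
Qed.

Lemma Dsum_ge0 (R : numDomainType) n k (w : {set 'I_n} -> R) d : 0 <= Dsum k w d.
Proof. by apply: sumr_ge0 => e _; apply: sumr_ge0. Qed.

Lemma Dsum_le (R : numFieldType) n k (w : {set 'I_n} -> R) m : (0 < k)%N ->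
  Dsum k w m.+1 <= m.+1%:R * (k * n)%:R ^+ m * Dsum k w 1.
Proof.
move=> k0; elim: m => [|m IH]; first by rewrite expr0 mulr1 mul1r.
apply: le_trans (DsumS _ _ k0) _.
have K0 : 0 <= (k * n)%:R :> R by [].
apply: le_trans (lerD (ler_wpM2l K0 IH) (lexx _)) _.
rewrite exprS -[m.+2]addn1 natrD le_eqVlt; apply/orP; left; apply/eqP; ring.
Qed.

Lemma Dsum_k (R : numFieldType) n k (w : {set 'I_n} -> R) : wtotal k w = 0 ->
  (\sum_(f : {set 'I_n} | #|f| == k) 1) * wnorm1 k w <= Dsum k w k.
Proof.
move=> wt; rewrite /Dsum [in X in _ <= X](bigID (fun e : {set 'I_n} => #|e| == k)) /=.
rewrite [X in _ <= _ + X]big1 ?addr0; last first.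
  by move=> e /negbTE Hne; apply: big_pred0 => f; rewrite /near Hne.
rewrite /wnorm1 mulr_sumr; apply: ler_sum => e /eqP He.
rewrite [X in _ <= X](eq_bigl (fun f : {set 'I_n} => #|f| == k)); last first.
  move=> f; rewrite /near He eqxx /=; case: (#|f| == k) => //=.
  by rewrite -He subset_leq_card // subsetDl.
have H := @ler_norm_sum R R _ (index_enum _) (fun f : {set 'I_n} => w e - w f) (fun f => #|f| == k).
apply: (le_trans _ H).
rewrite sumrB.
have -> : \sum_(f : {set 'I_n} | #|f| == k) w e = w e * \sum_(f : {set 'I_n} | #|f| == k) 1.
  by rewrite mulr_sumr; apply: eq_bigr => *; rewrite mulr1.
move: wt; rewrite /wtotal => ->; rewrite subr0 normrM mulrC.
rewrite (ger0_norm (sumr_ge0 _ _)) //.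
Qed.

Lemma D1_le (R : numFieldType) n k (w : {set 'I_n} -> R) :
  Dsum k w 1 <= \sum_(t | admissible k t)
      `|w (t.1.1 :|: [set t.1.2]) - w (t.1.1 :|: [set t.2])|.
Proof.
rewrite /Dsum (pair_big_dep xpredT (fun e f => near k 1 e f) (fun e f => `|w e - w f|)) /=.
apply: le_trans (@sum_le_image R _ _ _ (admissible k)
   (fun t => (t.1.1 :|: [set t.1.2], t.1.1 :|: [set t.2]))
   (fun p => `|w p.1 - w p.2|) _ _) _ => //.
  move=> [e f] /= /and3P [/eqP He /eqP Hf Hd].
  case: (ltnP #|e :\: f| 1) => H1.
    left; rewrite (@diff0_eq _ e f) ?subrr ?normr0 //; [by rewrite He Hf | lia].
  right.
  have Hx1 : #|e :\: f| = 1%N by lia.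
  have [x Hx] : exists x, x \in e :\: f by apply/card_gt0P; rewrite Hx1.
  have Hy1 : #|f :\: e| = 1%N by rewrite -distC // He Hf.
  have [y Hy] : exists y, y \in f :\: e by apply/card_gt0P; rewrite Hy1.
  have HX := card1_mem Hx1 Hx; have HY := card1_mem Hy1 Hy.
  exists (e :&: f, x, y).
    have := cardsID f e; rewrite Hx1 He => hc.
    move: Hx Hy; rewrite !inE => /andP [xnf xe] /andP [yne yf].
    rewrite /admissible /= !inE (negbTE xnf) (negbTE yne) andbF /=.
    apply/andP; split; first by rewrite -hc addn1.
    by apply/eqP => exy; move: yne; rewrite -exy xe.
  rewrite /=; congr pair; apply/setP => z; move: (HX z) (HY z); rewrite !inE.
    by case: (z \in f); case: (z \in e); case: (z == x); case: (z == y).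
  by case: (z \in f); case: (z \in e); case: (z == x); case: (z == y).
Qed.

Lemma N_le (R : numFieldType) n k : (0 < k)%N ->
  (#|[set t : {set 'I_n} * 'I_n * 'I_n | admissible k t]|)%:R
     <= (k * n)%:R * \sum_(f : {set 'I_n} | #|f| == k) (1 : R).
Proof.
move=> k0; rewrite -sum1dep_card natr_sum.
under eq_bigr do rewrite mulr1n.
apply: le_trans (@sum_le_image R _ _ _
   (fun q : {set 'I_n} * 'I_n * 'I_n => (#|q.1.1| == k) && (q.1.2 \in q.1.1))
   (fun q => (q.1.1 :\ q.1.2, q.1.2, q.2)) (fun _ => 1) _ _) _ => //.
  move=> [[A x] y] /and4P [/eqP HA xA yA xy] /=; right.
  exists (x |: A, x, y) => /=; last by rewrite setU1K.
  rewrite cardsU1 xA /= HA setU11 andbT; apply/eqP; lia.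
rewrite (eq_bigl (fun q : {set 'I_n} * 'I_n * 'I_n =>
    ((#|q.1.1| == k) && (q.1.2 \in q.1.1)) && true)); last by move=> q; rewrite andbT.
rewrite -(pair_big_dep (fun p : {set 'I_n} * 'I_n => (#|p.1| == k) && (p.2 \in p.1))
   (fun _ _ => true) (fun _ _ => (1:R))) /=.
under eq_bigr do rewrite sumr_const card_ord.
rewrite -(pair_big_dep (fun e : {set 'I_n} => #|e| == k) (fun e x => x \in e)
   (fun _ _ => (n%:R : R))) /=.
rewrite mulr_sumr; apply: ler_sum => e /eqP He.
by rewrite sumr_const He mulr1 -mulrnA mulnC.
Qed.

Lemma N_pos n k : (0 < k)%N -> (k < n)%N ->
  (0 < #|[set t : {set 'I_n} * 'I_n * 'I_n | admissible k t]|)%N.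
Proof.
case: k => [//|k] _ kn.
have : (0 < #|[set A : {set 'I_n} | #|A| == k]|)%N.
  by rewrite card_draws card_ord bin_gt0; lia.
case/card_gt0P => A; rewrite inE => /eqP /= HA.
have hc : (k + #|~: A|)%N = n by rewrite -HA cardsC card_ord.
have [x xA] : exists x, x \in ~: A.
  by apply/card_gt0P; rewrite -(ltn_add2l k) addn0 hc; lia.
have [y yA] : exists y, y \in (~: A) :\ x.
  apply/card_gt0P; have h2 : (1 < #|~: A|)%N by rewrite -(ltn_add2l k) hc addn1.
  by move: h2; rewrite (cardsD1 x (~: A)) xA.
apply/card_gt0P; exists (A, x, y); rewrite inE /admissible /= HA eqxx.
move: xA yA; rewrite !inE => xA /andP [yx yA]; by rewrite xA yA eq_sym yx.
Qed.

Theorem proposition3p3 (R : realType) (k : nat) (hk : (1 <= k)%N) :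
  exists c : R, 0 < c /\
    forall (n : nat) (w : {set 'I_n} -> R),
      (k < n)%N ->
      wtotal k w = 0 ->
      expected_diff k w >= c * (n%:R ^- k) * wnorm1 k w.
Proof.
exists ((k ^ k.+1)%:R)^-1; split; first by rewrite invr_gt0 ltr0n expn_gt0 hk.
move=> n w kn wt.
have N0 := N_pos hk kn.
rewrite /expected_diff ler_pdivlMr ?ltr0n //.
have h1 := Dsum_k wt.
have h3 := D1_le k w.
have h4 := @N_le R n k hk.
case: k hk kn wt h1 h3 h4 N0 => [//|k] _ kn wt h1 h3 h4 N0.
have h2 := @Dsum_le R n k.+1 w k isT.
set S := \sum_(t | admissible k.+1 t) _ in h3 *.
set N := #|_| in h4 *.
set M := \sum_(f : {set 'I_n} | #|f| == k.+1) (1:R) in h1 h4 *.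
set W := wnorm1 k.+1 w in h1 *.
have W0 : 0 <= W by apply: sumr_ge0 => *.
have M0 : 0 <= M by apply: sumr_ge0 => *.
have S0 : 0 <= S by apply: sumr_ge0 => *.
have n0 : (0 < n)%N by lia.
rewrite natrM in h4 h2; rewrite natrX.
set a := n%:R : R in h4 h2 *; set b := k.+1%:R : R in h4 h2 *.
have a0 : 0 < a by rewrite ltr0n.
have b0 : 0 < b by rewrite ltr0n.
have c0 : 0 <= (b ^+ k.+2)^-1 * a ^- k.+1 * W.
  by rewrite !mulr_ge0 // ?invr_ge0 ?exprn_ge0 // ltW.
apply: le_trans (ler_wpM2l c0 h4) _.
have hMW : M * W <= b * (b * a) ^+ k * S.
  apply: le_trans h1 (le_trans h2 _).
  by rewrite ler_wpM2l // mulr_ge0 // exprn_ge0 // mulr_ge0 // ltW.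
have e1 : (b ^+ k.+2)^-1 * a ^- k.+1 * W * (b * a * M)
   = ((b ^+ k.+2)^-1 * a ^- k.+1 * (b * a)) * (M * W) by ring.
rewrite e1.
have c1 : 0 <= (b ^+ k.+2)^-1 * a ^- k.+1 * (b * a).
  by rewrite !mulr_ge0 // ?invr_ge0 ?exprn_ge0 // ltW.
apply: le_trans (ler_wpM2l c1 hMW) _.
rewrite le_eqVlt; apply/orP; left; apply/eqP.
set X := b ^+ k.+2; set Y := a ^+ k.+1.
have eX : b * (b * a) ^+ k * (b * a) = X * Y by rewrite /X /Y exprMn !exprS; ring.
have -> : X^-1 / Y * (b * a) * (b * (b * a) ^+ k * S) = X^-1 / Y * (b * (b * a) ^+ k * (b * a)) * S.
  by ring.
rewrite eX.
have -> : X^-1 / Y * (X * Y) * S = (X^-1 * X) * (Y^-1 * Y) * S by ring.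
by rewrite !mulVf ?mul1r // expf_neq0 // lt0r_neq0.
Qed.
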